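(* For each $k\ge0$, a linear basis for the $k$-th level $C^k$ of the coradical filtration of $\mathcal{Y}Sym$ is $\{M_t : t\in\mathcal{Y}^0\sqcup\mathcal{Y}^1\sqcup\cdots\sqcup\mathcal{Y}^k\}$. In particular, a linear basis of the space of primitive elements of $\mathcal{Y}Sym$ is $\{M_t: t \text{ progressive}\}$.
   Context: $\mathcal{Y}_n$ is the set of rooted planar binary trees with $n$ internal nodes; $\mathcal{Y}_0=\{|\}$. $s\vee t$ is the tree with left subtree $s$, right subtree $t$ at the root; each $t\ne|$ is uniquely $t_l\vee t_r$. The Tamari order on $\mathcal{Y}_n$ is generated by replacing a subtree $(a\vee b)\vee c$ by the larger $a\vee(b\vee c)$. $s\backslash t$: $|\backslash t=t$, $s\backslash t=s_l\vee(s_r\backslash t)$. A tree $t\neq|$ is progressive if $t_r=|$; each $t\ne|$ decomposes uniquely as $t_1\backslash\cdots\backslash t_k$ with $t_i$ progressive; $\mathcal{Y}^0=\{|\}$ and $\mathcal{Y}^k$ ($k\ge1$) is the set of trees with exactly $k$ progressive components. $\mathcal{Y}Sym$ is the graded connected Hopf algebra over $\mathbb{Q}$ with basis $\{F_t\}$; with leaves of $t\in\mathcal{Y}_n$ numbered $0,\dots,n$, splitting at leaf $i$, $t\to(t_0,t_1)$, is defined recursively by $|\to(|,|)$ and, for $t=t_l\vee t_r$: if leaf $i$ is in $t_l$ with $t_l\to(a,b)$ then $t\to(a,b\vee t_r)$, if in $t_r$ with $t_r\to(c,d)$ then $t\to(t_l\vee c,d)$; $\Delta(F_t)=\sum_{i=0}^nF_{t_0}\otimes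 F_{t_1}$. $M_t=\sum_{t\le s}\mu_{\mathcal{Y}_n}(t,s)F_s$. Coradical filtration of a graded connected coalgebra $C$: $C^0$ is the degree-0 part, and $C^k=(\Delta^{(k)})^{-1}\big(\sum_{i+j=k}C^{\otimes i}\otimes C^0\otimes C^{\otimes j}\big)$, where $\Delta^{(k)}:C\to C^{\otimes(k+1)}$ is the iterated coproduct; primitive elements are $x$ with $\Delta(x)=x\otimes1+1\otimes x$, and $C^1=C^0\oplus P(C)$. *)

(* Defs.v *)
From HB Require Import structures.
From mathcomp Require Import all_boot all_order all_algebra.
Set Implicit Arguments. Unset Strict Implicit. Unset Printing Implicit Defensive.
Import Order.TTheory GRing.Theory Num.Theory.
Local Open Scope ring_scope.

(** Rooted planar binary trees: Leaf = | , Node s t = s \/ t. *)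
Inductive tree := Leaf | Node of tree & tree.

Fixpoint tree_eqb (s t : tree) : bool :=
  match s, t with
  | Leaf, Leaf => true
  | Node a b, Node c d => tree_eqb a c && tree_eqb b d
  | _, _ => false
  end.

Lemma tree_eqP : Equality.axiom tree_eqb.
Proof.
elim=> [|a IHa b IHb] [|c d] /=; try by constructor.
case: (IHa c) => [->|Hac]; last by constructor; case.
case: (IHb d) => [->|Hbd]; last by constructor; case.
by constructor.
Qed.

HB.instance Definition _ := hasDecEq.Build tree tree_eqP.

(** number of internal nodes; Y_n = trees with [tsize t = n] *)
Fixpoint tsize (t : tree) : nat :=
  if t is Node l r then (tsize l + tsize r).+1 else 0%N.

Fixpoint trees_hgt (m : nat) : seq tree :=
  if m is m'.+1 then
    Leaf :: [seq Node a b | a <- trees_hgt m', b <- trees_hgt m']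
  else [:: Leaf].

(** enumeration of Y_n (a tree with n internal nodes has height <= n) *)
Definition trees (n : nat) : seq tree :=
  [seq t <- trees_hgt n | tsize t == n].

Definition trees_upto (N : nat) : seq tree :=
  flatten [seq trees n | n <- iota 0 N.+1].

Fixpoint rot1 (t : tree) : seq tree :=
  match t with
  | Leaf => [::]
  | Node l r =>
      (if l is Node a b then [:: Node a (Node b r)] else [::])
      ++ [seq Node l' r | l' <- rot1 l] ++ [seq Node l r' | r' <- rot1 r]
  end.

(** Rotations preserve
    the number of internal nodes, so all trees reachable from [s] lie in
    Y_(tsize s), and it suffices to iterate #|Y_n| times. *)
Definition rot_step (l : seq tree) : seq tree := undup (l ++ flatten (map rot1 l)).
Definition tam_le (s t : tree) : bool :=
  t \in iter (size (trees (tsize s))) rot_step [:: s].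

(** Moebius function of the Tamari poset Y_n:
    mu(t,t) = 1, mu(t,s) = - sum_{t <= u < s} mu(t,u) for t < s, 0 otherwise.
    Fuel #|Y_n| bounds the length of chains. *)
Fixpoint muf (f : nat) (t s : tree) : rat :=
  if t == s then 1 else
  if ~~ tam_le t s then 0 else
  match f with
  | 0 => 0
  | f'.+1 => - \sum_(u <- trees (tsize t) | tam_le t u && (u != s) && tam_le u s)
                 muf f' t u
  end.
Definition mu (t s : tree) : rat := muf (size (trees (tsize t))) t s.

(** Elements of YSym are represented by their coefficient functions
    x : tree -> rat in the basis (F_t), subject to finite support. *)
Definition finsupp (x : tree -> rat) : Prop :=
  exists N : nat, forall t, (N < tsize t)%N -> x t = 0.

Definition Mbasis (t : tree) : tree -> rat :=
  fun s => if (tsize s == tsize t) && tam_le t s then mu t s else 0.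

(** Splitting of t at each leaf i = 0..n, listed in order of i. *)
Fixpoint splits (t : tree) : seq (tree * tree) :=
  match t with
  | Leaf => [:: (Leaf, Leaf)]
  | Node l r =>
      [seq (p.1, Node p.2 r) | p <- splits l] ++ [seq (Node l p.1, p.2) | p <- splits r]
  end.

(** Iterated coproduct of a basis element F_t, as a multiset (list) of
    (k+1)-tuples of trees: Delta^(0) = id, Delta^(k+1) = (id (x) Delta^(k)) o Delta. *)
Fixpoint deltaF (k : nat) (t : tree) : seq (seq tree) :=
  if k is k'.+1 then
    flatten [seq [seq p.1 :: u | u <- deltaF k' p.2] | p <- splits t]
  else [:: [:: t]].

(** Delta^(k) x in C^{(x)(k+1)}, as a coefficient function on (k+1)-tuples
    of trees (the coefficient of F_{u_0} (x) ... (x) F_{u_k}).  The coproduct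
    preserves degree, so only trees of total degree contribute. *)
Definition delta (k : nat) (x : tree -> rat) (u : seq tree) : rat :=
  \sum_(t <- trees (sumn (map tsize u))) x t * (count_mem u (deltaF k t))%:R.

(** C^k: Delta^(k) x lies in sum_{i+j=k} C^{(x)i} (x) C^0 (x) C^{(x)j}, where
    C^0 = span(F_|).  In the tensor basis this sum of subspaces consists
    exactly of the tensors supported on tuples having some entry equal to |. *)
Definition in_coradical (k : nat) (x : tree -> rat) : Prop :=
  finsupp x /\
  forall u : seq tree, size u = k.+1 -> delta k x u != 0 -> has (pred1 Leaf) u.

Definition primitive (x : tree -> rat) : Prop :=
  finsupp x /\
  forall a b : tree,
    delta 1 x [:: a; b] = x a * (b == Leaf)%:R + (a == Leaf)%:R * x b.

Fixpoint under (s t : tree) : tree :=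
  if s is Node sl sr then Node sl (under sr t) else t.

Definition progressive (t : tree) : bool :=
  if t is Node _ Leaf then true else false.

Definition in_Yk (k : nat) (t : tree) : Prop :=
  exists ps : seq tree,
    [/\ size ps = k, all progressive ps & foldr under Leaf ps = t].

(** finite linear combination sum_t c t * f t, where c vanishes on degrees > N *)
Definition lincomb (N : nat) (c : tree -> rat) (f : tree -> tree -> rat) : tree -> rat :=
  fun s => \sum_(t <- trees_upto N) c t * f t s.

Definition is_basis (P : (tree -> rat) -> Prop) (I : tree -> Prop)
    (f : tree -> tree -> rat) : Prop :=
  [/\ (forall t, I t -> P (f t)),
      (forall (N : nat) (c : tree -> rat),
          (forall t, (N < tsize t)%N -> c t = 0) ->
          (forall t, c t != 0 -> I t) ->
          lincomb N c f =1 (fun _ => 0) -> forall t, c t = 0)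
    & (forall x, P x -> exists (N : nat) (c : tree -> rat),
          [/\ (forall t, (N < tsize t)%N -> c t = 0),
              (forall t, c t != 0 -> I t)
            & x =1 lincomb N c f])].

(* Main.v *)
Require Import Defs.
From HB Require Import structures.
From mathcomp Require Import all_boot all_order all_algebra zify.
Import Defs.
Set Implicit Arguments. Unset Strict Implicit. Unset Printing Implicit Defensive.
Import Order.TTheory GRing.Theory Num.Theory.

Local Close Scope ring_scope.


Fixpoint phi (t : tree) : nat :=
  if t is Node l r then phi l + phi r + tsize r else 0.

Lemma rot1_size t u : u \in rot1 t -> tsize u = tsize t.
Proof.
elim: t u => [|l IHl r IHr] u //=.
rewrite !mem_cat => /or3P [H|H|H].
- by case: l IHl H => // a b _; rewrite inE => /eqP -> /=; lia.
- by case/mapP: H => l' /IHl H ->/=; rewrite H.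
- by case/mapP: H => r' /IHr H ->/=; rewrite H.
Qed.

Lemma rot1_phi t u : u \in rot1 t -> phi t < phi u.
Proof.
elim: t u => [|l IHl r IHr] u //=.
rewrite !mem_cat => /or3P [H|H|H].
- by case: l IHl H => // a b _; rewrite inE => /eqP -> /=; lia.
- by case/mapP: H => l' H ->/=; have := IHl _ H; lia.
- by case/mapP: H => r' H ->/=; have := IHr _ H; rewrite (rot1_size H); lia.
Qed.

Inductive tle : tree -> tree -> Prop :=
| tle_refl t : tle t t
| tle_step t u s : u \in rot1 t -> tle u s -> tle t s.

Lemma tle_trans a b c : tle a b -> tle b c -> tle a c.
Proof. by elim=> // t u s H _ IH /IH; apply: tle_step. Qed.

Lemma tle1 t u : u \in rot1 t -> tle t u.
Proof. by move=> H; apply: tle_step H (tle_refl _). Qed.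

Lemma tle_size t s : tle t s -> tsize t = tsize s.
Proof. by elim=> // t0 u s0 /rot1_size -> . Qed.

Lemma tle_phi t s : tle t s -> t <> s -> phi t < phi s.
Proof.
elim=> // t0 u s0 /rot1_phi H1 H2 IH _.
case: (eqVneq u s0) => [<-//|/eqP ne]; have := IH ne; lia.
Qed.

Lemma tle_phi_le t s : tle t s -> phi t <= phi s.
Proof. by move=> H; case: (eqVneq t s) => [->//|/eqP /(tle_phi H)/ltnW]. Qed.

Lemma tle_anti t s : tle t s -> tle s t -> t = s.
Proof.
move=> H1 H2; case: (eqVneq t s) => [//|/eqP ne].
have := tle_phi H1 ne; have := tle_phi_le H2; lia.
Qed.

Lemma tle_nodel l l' r : tle l l' -> tle (Node l r) (Node l' r).
Proof.
elim=> [t|t u s H _ IH]; first exact: tle_refl.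
apply: tle_step IH; rewrite /= !mem_cat; apply/or3P; apply: Or32.
by apply/mapP; exists u.
Qed.

Lemma tle_noder l r r' : tle r r' -> tle (Node l r) (Node l r').
Proof.
elim=> [t|t u s H _ IH]; first exact: tle_refl.
apply: tle_step IH; rewrite /= !mem_cat; apply/or3P; apply: Or33.
by apply/mapP; exists u.
Qed.

Lemma tle_node l l' r r' : tle l l' -> tle r r' -> tle (Node l r) (Node l' r').
Proof. by move=> H1 H2; apply: tle_trans (tle_nodel _ H1) (tle_noder _ H2). Qed.

Lemma tle_rot a b c : tle (Node (Node a b) c) (Node a (Node b c)).
Proof. by apply: tle1; rewrite /= inE eqxx. Qed.

Fixpoint height (t : tree) : nat :=
  if t is Node l r then (maxn (height l) (height r)).+1 else 0.

Lemma height_size t : height t <= tsize t.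
Proof. elim: t => //= l IHl r IHr; lia. Qed.

Lemma trees_hgt_mem m t : (t \in trees_hgt m) = (height t <= m).
Proof.
elim: m t => [|m IH] [|l r] //=.
rewrite inE /=; apply/allpairsP/idP.
- by case=> [[a b]] /= [Ha Hb [-> ->]]; move: Ha Hb; rewrite !IH; lia.
- by move=> H; exists (l, r); rewrite /= !IH; split=> //; lia.
Qed.

Lemma trees_hgt_uniq m : uniq (trees_hgt m).
Proof.
elim: m => //= m IH; apply/andP; split.
  by apply/allpairsP => [[[a b] /= [_ _]]].
apply: allpairs_uniq => // [[a b] [c d]] _ _ /= [-> ->] //.
Qed.

Lemma trees_mem n t : (t \in trees n) = (tsize t == n).
Proof.
rewrite /trees mem_filter trees_hgt_mem.
case: eqP => //= <-; exact: height_size.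
Qed.

Lemma trees_uniq n : uniq (trees n).
Proof. exact/filter_uniq/trees_hgt_uniq. Qed.

Lemma trees_upto_mem N t : (t \in trees_upto N) = (tsize t <= N).
Proof.
rewrite /trees_upto; apply/flattenP/idP.
- by case=> s /mapP [n]; rewrite mem_iota => Hn -> ; rewrite trees_mem => /eqP ->; lia.
- move=> H; exists (trees (tsize t)); last by rewrite trees_mem.
  by apply/mapP; exists (tsize t) => //; rewrite mem_iota; lia.
Qed.

Lemma trees_upto_uniq N : uniq (trees_upto N).
Proof.
rewrite /trees_upto; elim: N.+1 0%N => [|m IH] j //=.
rewrite cat_uniq trees_uniq IH /= andbT.
apply/hasPn => t /flattenP [s /mapP [i]]; rewrite mem_iota => Hi -> .
rewrite !trees_mem => /eqP ->; apply/negP => /eqP; lia.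
Qed.

Local Close Scope ring_scope.


Section Reach.
Variable s0 : tree.
Let R m := iter m rot_step [:: s0].

Lemma rot_step_sub A : {subset A <= rot_step A}.
Proof. by move=> x Hx; rewrite mem_undup mem_cat Hx. Qed.

Lemma rot_step_mono A B : {subset A <= B} -> {subset rot_step A <= rot_step B}.
Proof.
move=> H x; rewrite !mem_undup !mem_cat => /orP [/H -> //|/flattenP [l /mapP [y Hy ->] Hx]].
by apply/orP; right; apply/flattenP; exists (rot1 y) => //; apply/mapP; exists y => //; apply: H.
Qed.

Lemma R_uniq m : uniq (R m).
Proof. by case: m => //= m; apply: undup_uniq. Qed.

Lemma R_prop m t : t \in R m -> tle s0 t /\ tsize t = tsize s0.
Proof.
elim: m t => [|m IH] t /=; first by rewrite inE => /eqP ->; split=> //; apply: tle_refl.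
rewrite mem_undup mem_cat => /orP [/IH //|/flattenP [l /mapP [y /IH [Hy1 Hy2] ->] Hx]].
split; first by apply: tle_trans Hy1 (tle1 Hx).
by rewrite (rot1_size Hx).
Qed.

Lemma R_incr m k : {subset R m <= R (m + k)}.
Proof.
elim: k => [|k IH]; first by rewrite addn0.
by move=> x /IH Hx; rewrite addnS; apply: rot_step_sub.
Qed.

Lemma R_tle a b : tle a b -> forall m, a \in R m -> exists k, b \in R (m + k).
Proof.
elim=> [t m H|t u s H _ IH m Ht]; first by exists 0; rewrite addn0.
have Hu : u \in R m.+1.
  rewrite /= mem_undup mem_cat; apply/orP; right; apply/flattenP.
  by exists (rot1 t) => //; apply/mapP; exists t.
by case: (IH _ Hu) => k Hk; exists k.+1; rewrite addnS -addSn.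
Qed.

Lemma R_stable m : {subset R m.+1 <= R m} -> forall k, {subset R (m + k) <= R m}.
Proof.
move=> H; elim=> [|k IH]; first by rewrite addn0.
rewrite addnS => x /=; move/(rot_step_mono IH) => Hx.
by apply: H; rewrite /=; exact: Hx.
Qed.

Lemma uniq_size_lt (A B : seq tree) x :
  uniq A -> {subset A <= B} -> x \in B -> x \notin A -> size A < size B.
Proof.
move=> uA sAB xB xA; have : uniq (x :: A) by rewrite /= xA.
by move/uniq_leq_size => /(_ B); apply => y; rewrite inE => /orP [/eqP ->|/sAB].
Qed.

Lemma R_grow m : m < size (R m) \/ exists2 m0, m0 <= m & {subset R m0.+1 <= R m0}.
Proof.
elim: m => [|m [IH|[m0 H1 H2]]]; first by left.
- case: (boolP (all (fun x => x \in R m) (R m.+1))) => [/allP H|].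
    by right; exists m.
  case/allPn => x Hx Hn; left.
  have := @uniq_size_lt (R m) (R m.+1) x (R_uniq m) (@rot_step_sub (R m)) Hx Hn; lia.
- by right; exists m0 => //; lia.
Qed.

Lemma R_bound : {subset R (size (trees (tsize s0))) <= R (size (trees (tsize s0)))} -> True.
Proof. by []. Qed.

Lemma R_complete t : tle s0 t -> t \in R (size (trees (tsize s0))).
Proof.
move=> H; case: (R_tle H (m := 0)); first by rewrite inE.
move=> k; rewrite add0n => Hk.
set F := size (trees (tsize s0)).
case: (R_grow F) => [Hlt|[m0 Hm0 Hst]].
  have : size (R F) <= F.
    apply: uniq_leq_size (R_uniq F) _ => x /R_prop [_ Hx].
    by rewrite trees_mem Hx.
  lia.
have Hsub : {subset R m0 <= R F}.
  by move=> x Hx; have := R_incr (F - m0) Hx; rewrite subnKC.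
apply: Hsub; case: (leqP m0 k) => Hk0.
  move: (@R_stable m0 Hst (k - m0) t); rewrite subnKC //; apply; exact: Hk.
by have := R_incr (m0 - k) Hk; rewrite subnKC //; lia.
Qed.
End Reach.

Lemma tam_leP s t : reflect (tle s t) (tam_le s t).
Proof.
apply: (iffP idP); first by move/R_prop => [].
exact: R_complete.
Qed.

Lemma tam_le_size s t : tam_le s t -> tsize s = tsize t.
Proof. by move/tam_leP/tle_size. Qed.

Local Close Scope ring_scope.


Fixpoint split_at (i : nat) (t : tree) : tree * tree :=
  match t with
  | Leaf => (Leaf, Leaf)
  | Node l r => if i <= tsize l then ((split_at i l).1, Node (split_at i l).2 r)
                else (Node l (split_at (i - (tsize l).+1) r).1, (split_at (i - (tsize l).+1) r).2)
  end.

Lemma splits_at t : splits t = [seq split_at i t | i <- iota 0 (tsize t).+1].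
Proof.
elim: t => [//|l IHl r IHr]; rewrite [splits _]/= [tsize (Node _ _)]/=.
have -> : (tsize l + tsize r).+2 = (tsize l).+1 + (tsize r).+1 by lia.
rewrite iotaD map_cat IHl IHr -!map_comp; congr (_ ++ _).
  apply/eq_in_map => i; rewrite mem_iota => Hi /=.
  by have -> : i <= tsize l by lia.
have -> : iota (0 + (tsize l).+1) (tsize r).+1 = map (addn (tsize l).+1) (iota 0 (tsize r).+1) by rewrite -iotaDl addn0.
rewrite -map_comp; apply/eq_in_map => i _ /=.
have -> : ((tsize l).+1 + i <= tsize l) = false by lia.
by have -> : (tsize l).+1 + i - (tsize l).+1 = i by lia.
Qed.

Lemma split_size i t : i <= tsize t ->
  tsize (split_at i t).1 = i /\ tsize (split_at i t).2 = tsize t - i.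
Proof.
elim: t i => [|l IHl r IHr] i /=; first by move=> H; split; lia.
move=> Hi; case: ifP => Hil /=.
  by case: (IHl i Hil) => -> ->; split; lia.
have Hj : i - (tsize l).+1 <= tsize r by lia.
by case: (IHr _ Hj) => -> ->; split; lia.
Qed.

Lemma under_size a b : tsize (under a b) = tsize a + tsize b.
Proof. by elim: a => //= l _ r ->; lia. Qed.

Lemma split0 b : split_at 0 b = (Leaf, b).
Proof. by elim: b => //= l -> r _. Qed.

Lemma split_under a b : split_at (tsize a) (under a b) = (a, b).
Proof.
elim: a => [|al _ ar IH] /=; first exact: split0.
have -> : (tsize al + tsize ar).+1 <= tsize al = false by lia.
have -> : (tsize al + tsize ar).+1 - (tsize al).+1 = tsize ar by lia.
by rewrite IH.
Qed.

Lemma split_mono1 t u i : u \in rot1 t ->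
  tle (split_at i t).1 (split_at i u).1 /\ tle (split_at i t).2 (split_at i u).2.
Proof.
elim: t u i => [|l IHl r IHr] u i //=.
rewrite !mem_cat => /or3P [H|H|H].
- case: l IHl H => // a b _; rewrite inE => /eqP -> /=.
  case: (leqP i (tsize a)) => Hia.
    have -> : i <= (tsize a + tsize b).+1 by lia.
    by split; [apply: tle_refl | apply: tle_rot].
  case: (leqP i (tsize a + tsize b).+1) => Hib /=.
    have -> : i - (tsize a).+1 <= tsize b by lia.
    by split; apply: tle_refl.
  have -> : i - (tsize a).+1 <= tsize b = false by lia.
  have -> : i - (tsize a).+1 - (tsize b).+1 = i - (tsize a + tsize b).+2 by lia.
  by split; [apply: tle_rot | apply: tle_refl].
- case/mapP: H => l' Hl -> /=; rewrite (rot1_size Hl).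
  case: ifP => _ /=.
    by case: (IHl _ i Hl) => H1 H2; split => //; apply: tle_nodel.
  by split; [apply: tle_nodel; apply: tle1 | apply: tle_refl].
- case/mapP: H => r' Hr -> /=.
  case: ifP => _ /=.
    by split; [apply: tle_refl | apply: tle_noder; apply: tle1].
  by case: (IHr _ (i - (tsize l).+1) Hr) => H1 H2; split => //; apply: tle_noder.
Qed.

Lemma split_mono t u i : tle t u ->
  tle (split_at i t).1 (split_at i u).1 /\ tle (split_at i t).2 (split_at i u).2.
Proof.
elim=> [s|a b c H _ [IH1 IH2]]; first by split; apply: tle_refl.
case: (split_mono1 i H) => H1 H2.
by split; [apply: tle_trans H1 IH1 | apply: tle_trans H2 IH2].
Qed.

Lemma under_node x y r : tle (Node (under x y) r) (under x (Node y r)).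
Proof.
elim: x => [|xl _ xr IH] /=; first exact: tle_refl.
by apply: tle_trans (tle_rot _ _ _) (tle_noder _ IH).
Qed.

Lemma split_join t i : tle t (under (split_at i t).1 (split_at i t).2).
Proof.
elim: t i => [|l IHl r IHr] i /=; first exact: tle_refl.
case: ifP => _ /=.
  by apply: tle_trans (tle_nodel _ (IHl i)) (under_node _ _ _).
exact: tle_noder.
Qed.

Lemma under_monor a b b' : tle b b' -> tle (under a b) (under a b').
Proof. by elim: a => //= l _ r IH H; apply: tle_noder; apply: IH. Qed.

Lemma under_monol1 a a' b : a' \in rot1 a -> tle (under a b) (under a' b).
Proof.
elim: a a' => [|l IHl r IHr] a' //=.
rewrite !mem_cat => /or3P [H|H|H].
- by case: l IHl H => // x y _; rewrite inE => /eqP -> /=; apply: tle_rot.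
- by case/mapP: H => l' Hl -> /=; apply: tle_nodel; apply: tle1.
- by case/mapP: H => r' Hr -> /=; apply: tle_noder; apply: IHr.
Qed.

Lemma under_monol a a' b : tle a a' -> tle (under a b) (under a' b).
Proof.
elim=> [s|x y z H _ IH]; first exact: tle_refl.
exact: tle_trans (under_monol1 _ H) IH.
Qed.

Lemma galois t a b :
  tam_le t (under a b) =
  tam_le (split_at (tsize a) t).1 a && tam_le (split_at (tsize a) t).2 b.
Proof.
apply/tam_leP/andP.
- move=> /(split_mono (tsize a)); rewrite split_under /= => [[H1 H2]].
  by split; apply/tam_leP.
- case=> /tam_leP H1 /tam_leP H2.
  apply: tle_trans (split_join t (tsize a)) _.
  apply: tle_trans (under_monol _ H1) _.
  exact: under_monor.
Qed.

Lemma count_single (P : pred nat) (s : seq nat) j :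
  uniq s -> {in s, forall i, P i -> i = j} -> count P s = ((j \in s) && P j).
Proof.
elim: s => [//|x s IH] /= /andP [xs us] HP.
rewrite IH //; last by move=> i Hi; apply: HP; rewrite inE Hi orbT.
rewrite inE; case: (eqVneq x j) => [<-|ne] /=.
  by rewrite (negbTE xs) /=; case: (P x).
have -> : P x = false.
  by apply/negP => /(HP x); rewrite inE eqxx => /(_ isT) /eqP; rewrite (negbTE ne).
by [].
Qed.

Local Close Scope ring_scope.


Lemma count_splits t a b :
  count (fun p => tam_le p.1 a && tam_le p.2 b) (splits t) = tam_le t (under a b).
Proof.
rewrite splits_at count_map.
rewrite (@count_single _ _ (tsize a)) ?iota_uniq //; last first.
  move=> i; rewrite mem_iota add0n => Hi /= /andP [/tam_le_size H _].
  have Hit : i <= tsize t by lia.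
  by case: (split_size Hit) => H1 _; rewrite -H1 H.
rewrite mem_iota add0n /= -galois.
case: ltnP => //= H; case: (boolP (tam_le t (under a b))) => // /tam_le_size; rewrite under_size; lia.
Qed.

Definition join (u : seq tree) := foldr under Leaf u.

Lemma under_leaf a : under a Leaf = a.
Proof. by elim: a => //= l _ r ->. Qed.

Lemma join_size u : tsize (join u) = sumn (map tsize u).
Proof. by elim: u => //= a u <-; rewrite under_size. Qed.

Lemma count_deltaF k t u : size u = k.+1 ->
  count (fun w => all2 tam_le w u) (deltaF k t) = tam_le t (join u).
Proof.
elim: k t u => [|k IH] t [|u0 u] //=.
  by case: u => //= _; rewrite andbT addn0 under_leaf.
case=> Hu; rewrite count_flatten -map_comp.
rewrite -count_splits -sumn_count; congr sumn; apply/eq_map => p /=.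
rewrite count_map /=.
rewrite (@eq_count _ _ (fun w => tam_le p.1 u0 && all2 tam_le w u)) //.
case: (tam_le p.1 u0) => /=; first by rewrite -(IH p.2 u Hu).
by rewrite count_pred0.
Qed.

Fixpoint TB (u : seq tree) : seq (seq tree) :=
  if u is a :: u' then
    [seq b :: w | b <- [seq b <- trees (tsize a) | tam_le b a], w <- TB u']
  else [:: [::]].

Lemma TB_mem u w : (w \in TB u) = all2 tam_le w u.
Proof.
elim: u w => [|a u IH] [|b w] //=.
  by apply/negbTE/negP => /allpairsP [[c v] [_ _ //]].
apply/idP/idP.
  by case/allpairsP=> [[c v]] /=; rewrite mem_filter IH => [[/andP [H1 _] H2 [-> ->]]]; rewrite H1 H2.
case/andP=> H1 H2; apply/allpairsP; exists (b, w); rewrite /= mem_filter IH H1 H2 trees_mem.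
by rewrite (tam_le_size H1) eqxx.
Qed.

Lemma TB_uniq u : uniq (TB u).
Proof.
elim: u => //= a u IH; apply: allpairs_uniq => //.
  exact/filter_uniq/trees_uniq.
by move=> [b w] [c v] _ _ /= [-> ->].
Qed.

Lemma sum_eq_mem (S : seq (seq tree)) x : uniq S ->
  \sum_(y <- S) (x == y) = (x \in S).
Proof.
elim: S => [|y S IH] /=; first by rewrite big_nil.
case/andP=> yS uS; rewrite big_cons IH // inE.
by case: (eqVneq x y) => [->|] /=; [rewrite (negbTE yS)|].
Qed.

Lemma sum_count_mem (S L : seq (seq tree)) : uniq S ->
  \sum_(y <- S) count_mem y L = count (mem S) L.
Proof.
move=> uS; elim: L => [|x L IH] /=; first by rewrite big1.
by rewrite big_split /= IH sum_eq_mem.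
Qed.

Local Open Scope ring_scope.

Definition cx (x : tree -> rat) (t : tree) : rat :=
  \sum_(s <- trees (tsize t)) x s * (tam_le s t)%:R.

Lemma D_lemma k (x : tree -> rat) u : size u = k.+1 ->
  \sum_(w <- TB u) delta k x w = cx x (join u).
Proof.
move=> Hu; rewrite /delta /cx.
rewrite (eq_big_seq (fun w => \sum_(t <- trees (tsize (join u))) x t * (count_mem w (deltaF k t))%:R)); last first.
  move=> w; rewrite TB_mem => Hw; rewrite join_size; congr (\sum_(t <- trees _) _).
  elim: w u Hw {Hu} => [|b w IH] [|a u] //= /andP [H1 H2].
  by rewrite (tam_le_size H1) (IH _ H2).
rewrite exchange_big /=; apply: eq_bigr => t _.
rewrite -mulr_sumr -natr_sum sum_count_mem ?TB_uniq //.
rewrite -(count_deltaF t Hu); congr (_ * _%:R); apply: eq_count => w /=.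
by rewrite TB_mem.
Qed.

Local Close Scope ring_scope.


Lemma tam_le_refl t : tam_le t t.
Proof. by apply/tam_leP/tle_refl. Qed.

Lemma tam_le_trans a b c : tam_le a b -> tam_le b c -> tam_le a c.
Proof. by move=> /tam_leP H1 /tam_leP H2; apply/tam_leP; apply: tle_trans H1 H2. Qed.

Lemma tam_le_anti a b : tam_le a b -> tam_le b a -> a = b.
Proof. by move=> /tam_leP H1 /tam_leP H2; apply: tle_anti. Qed.

Lemma count_lt (T : eqType) (a b : pred T) (l : seq T) x :
  (forall y, a y -> b y) -> x \in l -> b x -> ~~ a x -> count a l < count b l.
Proof.
move=> Hab; elim: l => [//|y l IH] /=; rewrite inE => /orP [/eqP <-|Hx] Hb Ha.
  rewrite (negbTE Ha) Hb /= add0n add1n ltnS.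
  by apply: sub_count.
have := IH Hx Hb Ha; case: (boolP (a y)) => [/Hab ->|_]; first by lia.
case: (b y) => /=; lia.
Qed.

Definition hcnt (t s : tree) :=
  count (fun v => tam_le t v && (v != s) && tam_le v s) (trees (tsize t)).

Lemma hcnt_lt t u s : tam_le t u -> u != s -> tam_le u s -> hcnt t u < hcnt t s.
Proof.
move=> H1 H2 H3; apply: (count_lt (x := u)).
- move=> v /andP [/andP [Hv1 Hv2] Hv3]; rewrite Hv1 (tam_le_trans Hv3 H3) andbT /=.
  apply/eqP => Evs; move: Hv3; rewrite Evs => Hsu.
  by move/eqP: H2; apply; apply: tam_le_anti.
- by rewrite trees_mem (tam_le_size H1).
- by rewrite H1 H2 H3.
- by rewrite eqxx andbF andFb.
Qed.

Local Open Scope ring_scope.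

Lemma muf_stable f g t s : (hcnt t s < f)%N -> (f <= g)%N -> muf f t s = muf g t s.
Proof.
elim: f g s => [|f IH] [|g] s //= Hf Hg.
case: eqP => // _; case: (tam_le t s) => //=; congr (- _).
apply: eq_bigr => u /andP [/andP [H1 H2] H3].
apply: IH => //; have := hcnt_lt H1 H2 H3; lia.
Qed.

Lemma mu_refl t : mu t t = 1.
Proof. by rewrite /mu; case: (size _) => /= [|n]; rewrite eqxx. Qed.

Lemma mu_nle t s : ~~ tam_le t s -> mu t s = 0.
Proof.
move=> H; rewrite /mu; case: (size _) => /= [|n]; case: eqP => [E|_]; rewrite ?H //.
- by move: H; rewrite E tam_le_refl.
- by move: H; rewrite E tam_le_refl.
Qed.

Lemma hcnt_bound t s : tsize s = tsize t -> (hcnt t s < size (trees (tsize t)))%N.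
Proof.
move=> Hs; rewrite /hcnt -(count_predC (fun v => tam_le t v && (v != s) && tam_le v s)).
rewrite -[X in (X < _)%N]addn0 ltn_add2l -has_count; apply/hasP; exists s.
  by rewrite trees_mem Hs.
by rewrite /= eqxx andbF.
Qed.

Lemma mu_rec t s : t != s -> tam_le t s ->
  mu t s = - \sum_(u <- trees (tsize t) | tam_le t u && (u != s) && tam_le u s) mu t u.
Proof.
move=> ne le.
have Hb := hcnt_bound (esym (tam_le_size le)).
rewrite {1}/mu; move: Hb; case E: (size (trees (tsize t))) => [|f] Hb //.
rewrite [LHS]/= (negbTE ne) le /=; congr (- _); apply: eq_bigr => u /andP [/andP [H1 H2] H3].
rewrite /mu E; apply: muf_stable; last by [].
have := hcnt_lt H1 H2 H3; lia.
Qed.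

Lemma left_id t s : tsize s = tsize t ->
  \sum_(u <- trees (tsize t)) mu t u * (tam_le u s)%:R = (t == s)%:R.
Proof.
move=> Hs.
have Ht : t \in trees (tsize t) by rewrite trees_mem.
have Hs' : s \in trees (tsize t) by rewrite trees_mem Hs.
case: (eqVneq t s) => [<-|ne].
  rewrite (bigD1_seq t) ?trees_uniq //= mu_refl tam_le_refl mul1r big1 ?addr0 //.
  move=> u ut; case: (boolP (tam_le t u)) => [Htu|/mu_nle -> ]; last by rewrite mul0r.
  case: (boolP (tam_le u t)) => [Hut|]; last by rewrite mulr0.
  by move: ut; rewrite (tam_le_anti Htu Hut) eqxx.
case: (boolP (tam_le t s)) => [le|nle]; last first.
  rewrite big1 // => u _; case: (boolP (tam_le t u)) => [Htu|/mu_nle -> ]; last by rewrite mul0r.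
  case: (boolP (tam_le u s)) => [Hus|]; last by rewrite mulr0.
  by move: nle; rewrite (tam_le_trans Htu Hus).
rewrite (bigD1_seq s) ?trees_uniq //= tam_le_refl mulr1 (mu_rec ne le).
rewrite addrC; apply/eqP; rewrite subr_eq0; apply/eqP.
rewrite big_mkcond [in RHS]big_mkcond; apply: eq_bigr => u _.
case: (eqVneq u s) => [->|ne2] /=; first by rewrite andbF.
case: (boolP (tam_le t u)) => [Htu|/mu_nle ->] /=; last first.
  by rewrite mul0r.
by case: (tam_le u s); rewrite ?mulr1 ?mulr0.
Qed.

Lemma right_id n t s : tsize t = n -> tsize s = n ->
  \sum_(u <- trees n) (tam_le t u)%:R * mu u s = (t == s)%:R.
Proof.
move=> Ht Hs.
set Y := trees n; set m := size Y.
pose A : 'M[rat]_m := \matrix_(i, j) mu (nth Leaf Y i) (nth Leaf Y j).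
pose B : 'M[rat]_m := \matrix_(i, j) (tam_le (nth Leaf Y i) (nth Leaf Y j))%:R.
have uY : uniq Y := trees_uniq n.
have sY : forall i : 'I_m, tsize (nth Leaf Y i) = n.
  by move=> i; apply/eqP; rewrite -trees_mem mem_nth.
have AB : A *m B = 1%:M.
  apply/matrixP => i j; rewrite !mxE.
  have -> : (i == j) = (nat_of_ord i == nat_of_ord j) by [].  rewrite -(nth_uniq Leaf (ltn_ord i) (ltn_ord j) uY).

  rewrite -(@left_id (nth Leaf Y i) (nth Leaf Y j) (etrans (sY j) (esym (sY i)))).
  rewrite sY -/Y (big_nth Leaf) big_mkord.
  by apply: eq_bigr => k _; rewrite !mxE.
have BA := mulmx1C AB.
have Hti : (index t Y < m)%N by rewrite index_mem trees_mem Ht.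
have Hsi : (index s Y < m)%N by rewrite index_mem trees_mem Hs.
move/matrixP: BA => /(_ (Ordinal Hti) (Ordinal Hsi)); rewrite !mxE /=.
rewrite (big_nth Leaf) big_mkord -/m => E.
have -> : (t == s) = (index t Y == index s Y).
  by rewrite -(nth_uniq Leaf Hti Hsi uY) !nth_index ?trees_mem ?Ht ?Hs.
rewrite -E; apply: eq_bigr => k _; rewrite !mxE.
by rewrite !nth_index ?trees_mem ?Ht ?Hs.
Qed.

Local Close Scope ring_scope.

Local Open Scope ring_scope.

Lemma Mbasis_mu t s : Mbasis t s = mu t s.
Proof.
rewrite /Mbasis; case: (boolP (tam_le t s)) => [H|H]; last by rewrite andbF mu_nle.
by rewrite (tam_le_size H) eqxx.
Qed.

Lemma sum_delta (x : tree -> rat) n a : tsize a = n ->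
  \sum_(t <- trees n) x t * (t == a)%:R = x a.
Proof.
move=> Ha; rewrite (bigD1_seq a) ?trees_uniq ?trees_mem ?Ha //= eqxx mulr1 big1 ?addr0 //.
by move=> t /negbTE ->; rewrite mulr0.
Qed.

Lemma cx_M t t' : cx (Mbasis t) t' = (t == t')%:R.
Proof.
rewrite /cx; case: (eqVneq (tsize t') (tsize t)) => [E|ne].
  rewrite E -(left_id E); apply: eq_bigr => s _; by rewrite Mbasis_mu.
rewrite big1; last first.
  move=> s _; rewrite Mbasis_mu.
  case: (boolP (tam_le t s)) => [H|/mu_nle ->]; last by rewrite mul0r.
  case: (boolP (tam_le s t')) => [H2|]; last by rewrite mulr0.
  by move: ne; rewrite -(tam_le_size H2) -(tam_le_size H) eqxx.
by case: eqP => // E; move: ne; rewrite E eqxx.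
Qed.

Lemma sum_upto N n (F : tree -> rat) : (n <= N)%N ->
  \sum_(t <- trees_upto N | tsize t == n) F t = \sum_(t <- trees n) F t.
Proof.
move=> HnN; rewrite -big_filter; apply: perm_big; apply: uniq_perm.
- exact/filter_uniq/trees_upto_uniq.
- exact: trees_uniq.
- by move=> t; rewrite mem_filter trees_upto_mem trees_mem; case: eqP => // ->.
Qed.

Lemma expansion (x : tree -> rat) N : (forall t, (N < tsize t)%N -> x t = 0) ->
  [/\ (forall t, (N < tsize t)%N -> cx x t = 0) & x =1 lincomb N (cx x) Mbasis].
Proof.
move=> HN; split.
  move=> t Ht; rewrite /cx big1_seq // => s /andP [_]; rewrite trees_mem => /eqP Hs.
  by rewrite HN ?mul0r ?Hs.
move=> v; rewrite /lincomb.
rewrite (bigID (fun t => tsize t == tsize v)) /= [X in _ = _ + X]big1 ?addr0; last first.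
  move=> t ne; rewrite Mbasis_mu mu_nle ?mulr0 //.
  by apply/negP => /tam_le_size E; move: ne; rewrite E eqxx.
case: (leqP (tsize v) N) => Hv; last first.
  rewrite big1_seq ?HN // => t /andP [/eqP E]; rewrite trees_upto_mem; lia.
rewrite sum_upto //.
rewrite (eq_big_seq (fun t => \sum_(s <- trees (tsize v)) x s * ((tam_le s t)%:R * mu t v))); last first.
  move=> t; rewrite trees_mem => /eqP Ht.
  by rewrite /cx Ht Mbasis_mu mulr_suml; apply: eq_bigr => s _; rewrite mulrA.
rewrite exchange_big /=.
rewrite (eq_big_seq (fun s => x s * (s == v)%:R)); last first.
  move=> s; rewrite trees_mem => /eqP Hs; rewrite -mulr_sumr; congr (_ * _).
  exact: right_id.
by rewrite sum_delta.
Qed.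

Lemma indep N c : (forall t, (N < tsize t)%N -> c t = 0) ->
  lincomb N c Mbasis =1 (fun _ => 0) -> forall t, c t = 0.
Proof.
move=> HN H0 t; case: (leqP (tsize t) N) => Ht; last exact: HN.
have : cx (lincomb N c Mbasis) t = 0.
  by rewrite /cx big1 // => s _; rewrite H0 mul0r.
rewrite /cx /lincomb.
rewrite (eq_bigr (fun s => \sum_(t' <- trees_upto N) c t' * (Mbasis t' s * (tam_le s t)%:R))); last first.
  by move=> s _; rewrite mulr_suml; apply: eq_bigr => t' _; rewrite mulrA.
rewrite exchange_big /=.
rewrite (eq_bigr (fun t' => c t' * (t' == t)%:R)); last first.
  by move=> t' _; rewrite -mulr_sumr -cx_M.
rewrite (bigD1_seq t) ?trees_upto_uniq ?trees_upto_mem //= eqxx mulr1 big1 ?addr0 //.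
by move=> t' /negbTE ->; rewrite mulr0.
Qed.

Fixpoint comps (t : tree) : nat := if t is Node _ r then (comps r).+1 else 0.

Lemma in_Yk_comps j t : in_Yk j t <-> comps t = j.
Proof.
split.
  case=> ps [<- Hp <-]; elim: ps Hp => //= p ps IH /andP [Hp /IH <-].
  by case: p Hp => // l [].
elim: t j => [|l _ r IH] j /=; first by move=> <-; exists [::].
move=> <-; case: (IH _ erefl) => ps [Hs Hp Hf].
by exists (Node l Leaf :: ps); split; rewrite /= ?Hs ?Hp ?Hf.
Qed.

Lemma comps_under a b : comps (under a b) = (comps a + comps b)%N.
Proof. by elim: a => //= l _ r ->. Qed.

Lemma comps_join u : comps (join u) = sumn (map comps u).
Proof. by elim: u => //= a u <-; rewrite comps_under. Qed.

Lemma comps_leafless u : ~~ has (pred1 Leaf) u -> (size u <= comps (join u))%N.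
Proof.
rewrite comps_join; elim: u => //= a u IH; rewrite negb_or => /andP [Ha /IH].
by case: a Ha => //= l r _; lia.
Qed.

Fixpoint splitu (k : nat) (t : tree) : seq tree :=
  match k, t with
  | 0, _ => [:: t]
  | k'.+1, Node l r => Node l Leaf :: splitu k' r
  | k'.+1, Leaf => Leaf :: splitu k' Leaf
  end.

Lemma splitu_join k t : join (splitu k t) = t.
Proof.
elim: k t => [|k IH] [|l r] //=; rewrite ?under_leaf ?IH //.
Qed.

Lemma splitu_size k t : size (splitu k t) = k.+1.
Proof. by elim: k t => [|k IH] [|l r] //=; rewrite IH. Qed.

Lemma splitu_leafless k t : (k < comps t)%N -> ~~ has (pred1 Leaf) (splitu k t).
Proof.
elim: k t => [|k IH] [|l r] //= H; rewrite IH //.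
Qed.

Lemma all2_size (w u : seq tree) : all2 tam_le w u -> size w = size u.
Proof. by elim: w u => [|a w IH] [|b u] //= /andP [_ /IH ->]. Qed.

Lemma all2_refl (u : seq tree) : all2 tam_le u u.
Proof. by elim: u => //= a u ->; rewrite tam_le_refl. Qed.

Lemma all2_leafless (w u : seq tree) : all2 tam_le w u -> ~~ has (pred1 Leaf) u ->
  ~~ has (pred1 Leaf) w.
Proof.
elim: w u => [|a w IH] [|b u] //= /andP [H1 H2]; rewrite !negb_or => /andP [Hb Hu].
rewrite (IH _ H2 Hu) andbT; apply/negP => /eqP Ea; move: H1 Hb; rewrite Ea.
by move/tam_le_size; case: b.
Qed.

Definition Phi (u : seq tree) := sumn (map phi u).

Lemma all2_Phi (w u : seq tree) : all2 tam_le w u -> w != u -> (Phi w < Phi u)%N.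
Proof.
rewrite /Phi; elim: w u => [|a w IH] [|b u] //= /andP [/tam_leP H1 H2] ne.
have Hab := tle_phi_le H1.
case: (eqVneq w u) => [Ewu|newu].
  have neab : a <> b by move=> E; move: ne; rewrite E Ewu eqxx.
  have := tle_phi H1 neab; rewrite Ewu; lia.
have := IH _ H2 newu; lia.
Qed.

Lemma coradical_M k t : (comps t <= k)%N -> in_coradical k (Mbasis t).
Proof.
move=> Hk; split.
  exists (tsize t) => s Hs; rewrite /Mbasis; case: eqP => //= E; move: Hs; rewrite E; lia.
suff H : forall m u, (Phi u < m)%N -> size u = k.+1 -> ~~ has (pred1 Leaf) u ->
    delta k (Mbasis t) u = 0.
  move=> u Hu Hd; apply/negPn/negP => Hl; move/eqP: Hd; apply.
  exact: (H (Phi u).+1).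
elim=> [//|m IH] u HPhi Hu Hl.
have := D_lemma (Mbasis t) Hu; rewrite cx_M.
have -> : (t == join u) = false.
  apply/negbTE/eqP => E; have := comps_leafless Hl; rewrite -E Hu; lia.
rewrite (bigD1_seq u) ?TB_uniq ?TB_mem ?all2_refl //= big1_seq ?addr0 //.
move=> w /andP [nwu]; rewrite TB_mem => Hw.
apply: IH; first by have := all2_Phi Hw nwu; lia.
  by rewrite (all2_size Hw).
exact: all2_leafless Hw Hl.
Qed.

Lemma coradical_span k x t : in_coradical k x -> cx x t != 0 -> (comps t <= k)%N.
Proof.
case=> _ Hx; apply: contraR; rewrite -ltnNge => Hc.
have Hu := splitu_size k t.
rewrite -(splitu_join k t) -(D_lemma x Hu); apply/eqP; rewrite big1_seq //.
move=> w; rewrite TB_mem => Hw.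
have Hl := all2_leafless Hw (splitu_leafless Hc).
apply/eqP; apply/negPn/negP => Hd.
by move: (Hx w (etrans (all2_size Hw) Hu) Hd); rewrite (negbTE Hl).
Qed.

Local Close Scope ring_scope.

Local Open Scope ring_scope.

Lemma count_deltaF1 t a b :
  count_mem [:: a; b] (deltaF 1 t) =
  count (fun p : tree * tree => (p.1 == a) && (p.2 == b)) (splits t).
Proof.
rewrite /= count_flatten -sumn_count -map_comp; congr sumn; apply/eq_map => p /=.
by rewrite addn0 !eqseq_cons andbT.
Qed.

Lemma count_leafl t b :
  count (fun p : tree * tree => (p.1 == Leaf) && (p.2 == b)) (splits t) = (t == b).
Proof.
rewrite splits_at count_map (@count_single _ _ 0) ?iota_uniq //; last first.
move=> i; rewrite mem_iota add0n => Hi /andP [/eqP H _].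
have Hit : (i <= tsize t)%N by lia.
by case: (split_size Hit); rewrite H.
by rewrite mem_iota /= split0 /= ?eqxx.
Qed.

Lemma split_last t : split_at (tsize t) t = (t, Leaf).
Proof. by have := split_under t Leaf; rewrite under_leaf. Qed.

Lemma count_leafr t a :
  count (fun p : tree * tree => (p.1 == a) && (p.2 == Leaf)) (splits t) = (t == a).
Proof.
rewrite splits_at count_map (@count_single _ _ (tsize t)) ?iota_uniq //; last first.
move=> i; rewrite mem_iota add0n => Hi /andP [_ /eqP H].
have Hit : (i <= tsize t)%N by lia.
by case: (split_size Hit) => _; rewrite H /=; lia.
rewrite mem_iota /= split_last /= ?eqxx ?andbT.
by have -> : (tsize t < (tsize t).+1)%N by [].
Qed.

Lemma delta_leafl (x : tree -> rat) b : delta 1 x [:: Leaf; b] = x b.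
Proof.
rewrite /delta /= add0n addn0 -(sum_delta x (erefl (tsize b))).
by apply: eq_bigr => t _; rewrite count_deltaF1 count_leafl.
Qed.

Lemma delta_leafr (x : tree -> rat) a : delta 1 x [:: a; Leaf] = x a.
Proof.
rewrite /delta /= !addn0 -(sum_delta x (erefl (tsize a))).
by apply: eq_bigr => t _; rewrite count_deltaF1 count_leafr.
Qed.

Theorem corollary5p3_aux :
  (forall k : nat,
     is_basis (in_coradical k) (fun t => exists2 j, (j <= k)%N & in_Yk j t) Mbasis)
  /\ is_basis primitive (fun t => progressive t) Mbasis.
Proof.
split.
  move=> k; split.
  - by move=> t [j Hj /in_Yk_comps Hc]; apply: coradical_M; rewrite Hc.
  - by move=> N c HN _ H0; exact: (indep HN H0).
  - move=> x Hx; case: (Hx) => [[N HN] _]; case: (expansion HN) => H1 H2.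
    exists N, (cx x); split => // t Hct; exists (comps t).
      exact: coradical_span Hx Hct.
    exact/in_Yk_comps.
split.
- move=> t Hp.
  have Hc : (comps t <= 1)%N by case: t Hp => // l [].
  case: (coradical_M Hc) => Hfs Hcor; split => // a b.
  have x0 : Mbasis t Leaf = 0 by rewrite /Mbasis; case: t Hp {Hc Hfs Hcor}.
  case: (eqVneq a Leaf) => [->|na]; first by rewrite delta_leafl x0 mul0r add0r mul1r.
  case: (eqVneq b Leaf) => [->|nb]; first by rewrite delta_leafr mulr1 mul0r addr0.
  rewrite mulr0 mul0r addr0; apply/eqP/negPn/negP => Hd.
  by move: (Hcor [:: a; b] erefl Hd); rewrite /= (negbTE na) (negbTE nb).
- by move=> N c HN _ H0; exact: (indep HN H0).
- move=> x [Hfs Hd].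
  have x0 : x Leaf = 0.
    have := Hd Leaf Leaf; rewrite delta_leafl eqxx mulr1 mul1r => E.
    by apply/eqP; rewrite -(addrI _ (etrans (addr0 _) E)).
  have Hx : in_coradical 1 x.
    split => // -[|a [|b []]] // _; rewrite Hd.
    case: (eqVneq a Leaf) => [->|na] //=; case: (eqVneq b Leaf) => [->|nb] /=; first by rewrite orbT.
    by rewrite mulr0 mul0r addr0 eqxx.
  case: Hfs => N HN; case: (expansion HN) => H1 H2.
  exists N, (cx x); split => // t Hct.
  have := coradical_span Hx Hct.
  case: t Hct => [|l [|rl rr]] //=.
  rewrite /cx; have -> : trees (tsize Leaf) = [:: Leaf] by [].
  by rewrite big_seq1 x0 mul0r eqxx.
Qed.


Local Close Scope ring_scope.

Theorem corollary5p3 :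
  (forall k : nat,
     is_basis (in_coradical k) (fun t => exists2 j, (j <= k)%N & in_Yk j t) Mbasis)
  /\ is_basis primitive (fun t => progressive t) Mbasis.
Proof. exact: corollary5p3_aux. Qed.
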